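(* Let $\mathcal U=(V,\tilde V,W,\tilde W,R)$ be a gradient space, let $\mathcal K_0\subseteq\mathrm{Sob}(\mathcal U)$ be a nonempty convex Poincaré set which is closed with respect to the norm of $V$, and let $f\in\mathrm{Sob}(\mathcal U)$. Then the Dirichlet problem with respect to $\mathcal K_f=\mathcal K_0+f$ has at least one solution, i.e. there exists $u\in\mathcal K_f$ with $\|g_u\|_W=\inf_{v\in\mathcal K_f}\|g_v\|_W$. Moreover, if $u_1,u_2$ are two solutions, then $g_{u_1}=g_{u_2}$.
   Context: Let $\tilde V,\tilde W$ be vector spaces over $\mathbf R$ or $\mathbf C$. A gradient relation is a set $R\subseteq\tilde V\times\tilde W$ such that (G1) if $(u,g)\in R$ and $(u',g')\in R$ then $(u+u',g+g')\in R$; (G2) if $(u,g)\in R$ and $\alpha>0$ then $(\alpha u,\alpha g)\in R$. A gradient space $\mathcal U=(V,\tilde V,W,\tilde W,R)$ consists of vector spaces $\tilde V,\tilde W$, a gradient relation $R\subseteq\tilde V\times\tilde W$, and linear subspaces $V\subseteq\tilde V$, $W\subseteq\tilde W$ such that: (GS1) $V$ is a reflexive Banach space with norm $\|\cdot\|_V$; (GS2) $W$ is a reflexive and strictly convex Banach space with norm $\|\cdot\|_W$; (GS3) if $(u,g)\in R$ with $u\in V$, $g\in W$, then there exists $g'\in W$ with $(-u,g')\in R$; (GS4) if $u,u_i\in V$ and $g,g_i\in W$ with $(u_i,g_i)\in R$ for $i=1,2,\dots$, $\|u-u_i\|_V\to0$ and $\|g-g_i\|_W\to0$, then $(u,g)\in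 R$. The Sobolev space of $\mathcal U$ is $\mathrm{Sob}(\mathcal U)=\{u\in V:(u,g)\in R\text{ for some }g\in W\}$. Each $u\in\mathrm{Sob}(\mathcal U)$ has a unique minimal gradient $g_u\in W$: $(u,g_u)\in R$ and $\|g_u\|_W\le\|g\|_W$ for all $g\in W$ with $(u,g)\in R$. A Poincaré set is a subset $A\subseteq\mathrm{Sob}(\mathcal U)$ for which there is $C>0$ such that $\|u\|_V\le C\|g\|_W$ for all $u\in A$ and all $g\in W$ with $(u,g)\in R$. For $\mathcal K_0\subseteq\mathrm{Sob}(\mathcal U)$ and $f\in\mathrm{Sob}(\mathcal U)$, $\mathcal K_f=\mathcal K_0+f=\{v\in\mathrm{Sob}(\mathcal U):v-f\in\mathcal K_0\}$; a solution of the Dirichlet problem with respect to $\mathcal K_f$ is $u\in\mathcal K_f$ with $\|g_u\|_W=\inf_{v\in\mathcal K_f}\|g_v\|_W$. *)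

(* Defs.v *)
From Stdlib Require Import Reals.
Open Scope R_scope.

Record VectSpace (X : Type) := {
  vzero : X;
  vadd : X -> X -> X;
  vopp : X -> X;
  vscal : R -> X -> X;
  vadd_assoc : forall x y z, vadd x (vadd y z) = vadd (vadd x y) z;
  vadd_comm : forall x y, vadd x y = vadd y x;
  vadd_0 : forall x, vadd vzero x = x;
  vadd_opp : forall x, vadd x (vopp x) = vzero;
  vscal_assoc : forall a b x, vscal a (vscal b x) = vscal (a * b) x;
  vscal_1 : forall x, vscal 1 x = x;
  vscal_addr : forall a x y, vscal a (vadd x y) = vadd (vscal a x) (vscal a y);
  vscal_addl : forall a b x, vscal (a + b) x = vadd (vscal a x) (vscal b x)
}.

Arguments vzero {X} _.
Arguments vadd {X} _ _ _.
Arguments vopp {X} _ _.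
Arguments vscal {X} _ _ _.

Definition vsub {X} (S : VectSpace X) (x y : X) : X := vadd S x (vopp S y).

Definition is_subspace {X} (S : VectSpace X) (P : X -> Prop) : Prop :=
  P (vzero S) /\
  (forall x y, P x -> P y -> P (vadd S x y)) /\
  (forall a x, P x -> P (vscal S a x)).

(** [n] is a norm on the subspace [P] (values outside [P] are irrelevant). *)
Definition is_norm_on {X} (S : VectSpace X) (P : X -> Prop) (n : X -> R) : Prop :=
  (forall x, P x -> 0 <= n x) /\
  (forall x, P x -> n x = 0 -> x = vzero S) /\
  (forall a x, P x -> n (vscal S a x) = Rabs a * n x) /\
  (forall x y, P x -> P y -> n (vadd S x y) <= n x + n y).

Definition is_complete {X} (S : VectSpace X) (P : X -> Prop) (n : X -> R) : Prop :=
  forall s : nat -> X, (forall k, P (s k)) ->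
    (forall eps, eps > 0 -> exists N, forall p q, (p >= N)%nat -> (q >= N)%nat ->
        n (vsub S (s p) (s q)) < eps) ->
    exists x, P x /\ Un_cv (fun k => n (vsub S (s k) x)) 0.

Definition is_Banach {X} (S : VectSpace X) (P : X -> Prop) (n : X -> R) : Prop :=
  is_subspace S P /\ is_norm_on S P n /\ is_complete S P n.

Definition is_linear_on {X} (S : VectSpace X) (P : X -> Prop) (phi : X -> R) : Prop :=
  (forall x y, P x -> P y -> phi (vadd S x y) = phi x + phi y) /\
  (forall a x, P x -> phi (vscal S a x) = a * phi x).

Definition fbound {X} (P : X -> Prop) (n : X -> R) (phi : X -> R) (M : R) : Prop :=
  forall x, P x -> Rabs (phi x) <= M * n x.

Definition is_dual_elt {X} (S : VectSpace X) (P : X -> Prop) (n : X -> R)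
  (phi : X -> R) : Prop :=
  is_linear_on S P phi /\ exists M, fbound P n phi M.

(** Continuous linear functionals on the dual (elements of the bidual).
    Functionals are identified when they agree on [P]. *)
Definition is_bidual_elt {X} (S : VectSpace X) (P : X -> Prop) (n : X -> R)
  (Psi : (X -> R) -> R) : Prop :=
  (forall phi psi, is_dual_elt S P n phi -> (forall x, P x -> phi x = psi x) ->
      Psi phi = Psi psi) /\
  (forall phi psi, is_dual_elt S P n phi -> is_dual_elt S P n psi ->
      Psi (fun x => phi x + psi x) = Psi phi + Psi psi) /\
  (forall a phi, is_dual_elt S P n phi -> Psi (fun x => a * phi x) = a * Psi phi) /\
  (exists C, forall phi M, is_dual_elt S P n phi -> fbound P n phi M ->
      Rabs (Psi phi) <= C * M).

Definition is_reflexive {X} (S : VectSpace X) (P : X -> Prop) (n : X -> R) : Prop :=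
  forall Psi, is_bidual_elt S P n Psi ->
    exists x, P x /\ forall phi, is_dual_elt S P n phi -> Psi phi = phi x.

Definition is_strictly_convex {X} (S : VectSpace X) (P : X -> Prop) (n : X -> R) : Prop :=
  forall x y, P x -> P y -> n x = 1 -> n y = 1 -> x <> y ->
    n (vscal S (/2) (vadd S x y)) < 1.

Record GradientSpace := {
  Vt : Type;
  Wt : Type;
  VS : VectSpace Vt;
  WS : VectSpace Wt;
  Vp : Vt -> Prop;
  Wp : Wt -> Prop;
  nV : Vt -> R;
  nW : Wt -> R;
  Rel : Vt -> Wt -> Prop;
  G1 : forall u g u' g', Rel u g -> Rel u' g' -> Rel (vadd VS u u') (vadd WS g g');
  G2 : forall u g a, Rel u g -> a > 0 -> Rel (vscal VS a u) (vscal WS a g);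
  GS1 : is_Banach VS Vp nV /\ is_reflexive VS Vp nV;
  GS2 : is_Banach WS Wp nW /\ is_reflexive WS Wp nW /\ is_strictly_convex WS Wp nW;
  GS3 : forall u g, Rel u g -> Vp u -> Wp g -> exists g', Wp g' /\ Rel (vopp VS u) g';
  GS4 : forall u g (us : nat -> Vt) (gs : nat -> Wt),
      Vp u -> Wp g -> (forall i, Vp (us i)) -> (forall i, Wp (gs i)) ->
      (forall i, Rel (us i) (gs i)) ->
      Un_cv (fun i => nV (vsub VS u (us i))) 0 ->
      Un_cv (fun i => nW (vsub WS g (gs i))) 0 ->
      Rel u g
}.

Section GS.
Variable U : GradientSpace.

Definition Sob (u : Vt U) : Prop := Vp U u /\ exists g, Wp U g /\ Rel U u g.

Definition is_min_grad (u : Vt U) (g : Wt U) : Prop :=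
  Wp U g /\ Rel U u g /\ forall g', Wp U g' -> Rel U u g' -> nW U g <= nW U g'.

Definition is_Poincare_set (A : Vt U -> Prop) : Prop :=
  (forall u, A u -> Sob u) /\
  exists C, C > 0 /\ forall u g, A u -> Wp U g -> Rel U u g -> nV U u <= C * nW U g.

Definition is_convex_set (A : Vt U -> Prop) : Prop :=
  forall u v t, A u -> A v -> 0 <= t <= 1 ->
    A (vadd (VS U) (vscal (VS U) t u) (vscal (VS U) (1 - t) v)).

Definition is_V_closed (A : Vt U -> Prop) : Prop :=
  forall (us : nat -> Vt U) u, (forall i, A (us i)) -> Vp U u ->
    Un_cv (fun i => nV U (vsub (VS U) (us i) u)) 0 -> A u.

Definition Kshift (K0 : Vt U -> Prop) (f : Vt U) (v : Vt U) : Prop :=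
  Sob v /\ K0 (vsub (VS U) v f).

Definition is_Dirichlet_solution (K : Vt U -> Prop) (u : Vt U) : Prop :=
  K u /\ exists gu, is_min_grad u gu /\
    forall v gv, K v -> is_min_grad v gv -> nW U gu <= nW U gv.

End GS.

(* Main.v *)
Require Import Defs.
From Stdlib Require Import Reals Lra Lia Classical ClassicalEpsilon FunctionalExtensionality.
From mathcomp Require classical_sets.
Open Scope R_scope.


Section Vec.
Context {X : Type} (S : VectSpace X).

Lemma vadd_0r x : vadd S x (vzero S) = x.
Proof. rewrite vadd_comm; apply vadd_0. Qed.

Lemma vadd_ACA p q r s : vadd S (vadd S p q) (vadd S r s) = vadd S (vadd S p r) (vadd S q s).
Proof.
rewrite <- !vadd_assoc. f_equal. rewrite !vadd_assoc. f_equal. apply vadd_comm.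
Qed.

Lemma vadd_cancel x y z : vadd S x y = vadd S x z -> y = z.
Proof.
intros H. rewrite <- (vadd_0 _ S y), <- (vadd_0 _ S z).
rewrite <- (vadd_opp _ S x). rewrite (vadd_comm _ S x).
rewrite <- !vadd_assoc, H. reflexivity.
Qed.

Lemma vscal_0l x : vscal S 0 x = vzero S.
Proof.
apply (vadd_cancel (vscal S 0 x)). rewrite <- vscal_addl, vadd_0r. f_equal; ring.
Qed.

Lemma vopp_scal x : vopp S x = vscal S (-1) x.
Proof.
apply (vadd_cancel x). rewrite vadd_opp.
rewrite <- (vscal_1 _ S x) at 1. rewrite <- vscal_addl.
replace (1 + -1) with 0 by ring. symmetry; apply vscal_0l.
Qed.

Lemma vscal_0r a : vscal S a (vzero S) = vzero S.
Proof.
rewrite <- (vscal_0l (vzero S)), vscal_assoc. replace (a*0) with 0 by ring. reflexivity.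
Qed.

Definition lc (a1 a2 a3 a4 a5 a6 : R) (x1 x2 x3 x4 x5 x6 : X) : X :=
  vadd S (vscal S a1 x1) (vadd S (vscal S a2 x2) (vadd S (vscal S a3 x3)
   (vadd S (vscal S a4 x4) (vadd S (vscal S a5 x5) (vscal S a6 x6))))).

Lemma lc_add a1 a2 a3 a4 a5 a6 b1 b2 b3 b4 b5 b6 x1 x2 x3 x4 x5 x6 :
  vadd S (lc a1 a2 a3 a4 a5 a6 x1 x2 x3 x4 x5 x6) (lc b1 b2 b3 b4 b5 b6 x1 x2 x3 x4 x5 x6)
  = lc (a1+b1) (a2+b2) (a3+b3) (a4+b4) (a5+b5) (a6+b6) x1 x2 x3 x4 x5 x6.
Proof.
unfold lc.
do 5 (rewrite vadd_ACA; f_equal; [symmetry; apply vscal_addl|]).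
symmetry; apply vscal_addl.
Qed.

Lemma lc_scal c a1 a2 a3 a4 a5 a6 x1 x2 x3 x4 x5 x6 :
  vscal S c (lc a1 a2 a3 a4 a5 a6 x1 x2 x3 x4 x5 x6)
  = lc (c*a1) (c*a2) (c*a3) (c*a4) (c*a5) (c*a6) x1 x2 x3 x4 x5 x6.
Proof. unfold lc. rewrite !vscal_addr, !vscal_assoc. reflexivity. Qed.

Lemma R_add e1 e2 a1 a2 a3 a4 a5 a6 b1 b2 b3 b4 b5 b6 x1 x2 x3 x4 x5 x6 :
  e1 = lc a1 a2 a3 a4 a5 a6 x1 x2 x3 x4 x5 x6 ->
  e2 = lc b1 b2 b3 b4 b5 b6 x1 x2 x3 x4 x5 x6 ->
  vadd S e1 e2 = lc (a1+b1) (a2+b2) (a3+b3) (a4+b4) (a5+b5) (a6+b6) x1 x2 x3 x4 x5 x6.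
Proof. intros -> ->; apply lc_add. Qed.

Lemma R_scal c e a1 a2 a3 a4 a5 a6 x1 x2 x3 x4 x5 x6 :
  e = lc a1 a2 a3 a4 a5 a6 x1 x2 x3 x4 x5 x6 ->
  vscal S c e = lc (c*a1) (c*a2) (c*a3) (c*a4) (c*a5) (c*a6) x1 x2 x3 x4 x5 x6.
Proof. intros ->; apply lc_scal. Qed.

Lemma R_opp e a1 a2 a3 a4 a5 a6 x1 x2 x3 x4 x5 x6 :
  e = lc a1 a2 a3 a4 a5 a6 x1 x2 x3 x4 x5 x6 ->
  vopp S e = lc (-1*a1) (-1*a2) (-1*a3) (-1*a4) (-1*a5) (-1*a6) x1 x2 x3 x4 x5 x6.
Proof. intros ->; rewrite vopp_scal; apply lc_scal. Qed.

Lemma R_sub e1 e2 a1 a2 a3 a4 a5 a6 b1 b2 b3 b4 b5 b6 x1 x2 x3 x4 x5 x6 :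
  e1 = lc a1 a2 a3 a4 a5 a6 x1 x2 x3 x4 x5 x6 ->
  e2 = lc b1 b2 b3 b4 b5 b6 x1 x2 x3 x4 x5 x6 ->
  vsub S e1 e2 = lc (a1+ -1*b1) (a2+ -1*b2) (a3+ -1*b3) (a4+ -1*b4) (a5+ -1*b5) (a6+ -1*b6) x1 x2 x3 x4 x5 x6.
Proof. intros H1 H2; unfold vsub; apply R_add; [exact H1| apply R_opp; exact H2]. Qed.

Lemma R_zero x1 x2 x3 x4 x5 x6 : vzero S = lc 0 0 0 0 0 0 x1 x2 x3 x4 x5 x6.
Proof. unfold lc. rewrite !vscal_0l, !vadd_0. reflexivity. Qed.

Lemma lc_ext a1 a2 a3 a4 a5 a6 b1 b2 b3 b4 b5 b6 x1 x2 x3 x4 x5 x6 :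
  a1 = b1 -> a2 = b2 -> a3 = b3 -> a4 = b4 -> a5 = b5 -> a6 = b6 ->
  lc a1 a2 a3 a4 a5 a6 x1 x2 x3 x4 x5 x6 = lc b1 b2 b3 b4 b5 b6 x1 x2 x3 x4 x5 x6.
Proof. intros; subst; reflexivity. Qed.

Lemma R_at1 x1 x2 x3 x4 x5 x6 : x1 = lc 1 0 0 0 0 0 x1 x2 x3 x4 x5 x6.
Proof. unfold lc. rewrite !vscal_0l, vscal_1, !vadd_0, vadd_0r. reflexivity. Qed.
Lemma R_at2 x1 x2 x3 x4 x5 x6 : x2 = lc 0 1 0 0 0 0 x1 x2 x3 x4 x5 x6.
Proof. unfold lc. rewrite !vscal_0l, vscal_1, !vadd_0, vadd_0r. reflexivity. Qed.
Lemma R_at3 x1 x2 x3 x4 x5 x6 : x3 = lc 0 0 1 0 0 0 x1 x2 x3 x4 x5 x6.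
Proof. unfold lc. rewrite !vscal_0l, vscal_1, !vadd_0, vadd_0r. reflexivity. Qed.
Lemma R_at4 x1 x2 x3 x4 x5 x6 : x4 = lc 0 0 0 1 0 0 x1 x2 x3 x4 x5 x6.
Proof. unfold lc. rewrite !vscal_0l, vscal_1, !vadd_0, vadd_0r. reflexivity. Qed.
Lemma R_at5 x1 x2 x3 x4 x5 x6 : x5 = lc 0 0 0 0 1 0 x1 x2 x3 x4 x5 x6.
Proof. unfold lc. rewrite !vscal_0l, vscal_1, !vadd_0, vadd_0r. reflexivity. Qed.
Lemma R_at6 x1 x2 x3 x4 x5 x6 : x6 = lc 0 0 0 0 0 1 x1 x2 x3 x4 x5 x6.
Proof. unfold lc. rewrite !vscal_0l, vscal_1, !vadd_0. reflexivity. Qed.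

End Vec.

Ltac reif x1 x2 x3 x4 x5 x6 :=
  lazymatch goal with
  | |- ?e = _ =>
    first
    [ constr_eq e x1; eapply (R_at1 _ x1 x2 x3 x4 x5 x6)
    | constr_eq e x2; eapply (R_at2 _ x1 x2 x3 x4 x5 x6)
    | constr_eq e x3; eapply (R_at3 _ x1 x2 x3 x4 x5 x6)
    | constr_eq e x4; eapply (R_at4 _ x1 x2 x3 x4 x5 x6)
    | constr_eq e x5; eapply (R_at5 _ x1 x2 x3 x4 x5 x6)
    | constr_eq e x6; eapply (R_at6 _ x1 x2 x3 x4 x5 x6)
    | lazymatch e with
      | vadd _ _ _ => eapply R_add; [reif x1 x2 x3 x4 x5 x6 | reif x1 x2 x3 x4 x5 x6]
      | vsub _ _ _ => eapply R_sub; [reif x1 x2 x3 x4 x5 x6 | reif x1 x2 x3 x4 x5 x6]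
      | vscal _ _ _ => eapply R_scal; reif x1 x2 x3 x4 x5 x6
      | vopp _ _ => eapply R_opp; reif x1 x2 x3 x4 x5 x6
      | vzero _ => apply (R_zero _ x1 x2 x3 x4 x5 x6)
      end ]
  end.

Ltac vsolve_gen x1 x2 x3 x4 x5 x6 :=
  eapply eq_trans; [reif x1 x2 x3 x4 x5 x6 |];
  symmetry; eapply eq_trans; [reif x1 x2 x3 x4 x5 x6 |];
  apply lc_ext.

Tactic Notation "vsolve" constr(x1) :=
  vsolve_gen x1 x1 x1 x1 x1 x1; try ring.
Tactic Notation "vsolve" constr(x1) constr(x2) :=
  vsolve_gen x1 x2 x2 x2 x2 x2; try ring.
Tactic Notation "vsolve" constr(x1) constr(x2) constr(x3) :=
  vsolve_gen x1 x2 x3 x3 x3 x3; try ring.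
Tactic Notation "vsolve" constr(x1) constr(x2) constr(x3) constr(x4) :=
  vsolve_gen x1 x2 x3 x4 x4 x4; try ring.
Tactic Notation "vsolve" constr(x1) constr(x2) constr(x3) constr(x4) constr(x5) :=
  vsolve_gen x1 x2 x3 x4 x5 x5; try ring.
Tactic Notation "vsolve" constr(x1) constr(x2) constr(x3) constr(x4) constr(x5) constr(x6) :=
  vsolve_gen x1 x2 x3 x4 x5 x6; try ring.



Lemma my_zorn (T: Type) (P : (T -> Prop) -> Prop) :
  (forall F : (T->Prop) -> Prop, (forall A, F A -> P A) ->
     (forall A B, F A -> F B -> (forall x, A x -> B x) \/ (forall x, B x -> A x)) ->
     P (fun x => exists2 A, F A & A x)) ->
  exists A, P A /\ forall B, (forall x, A x -> B x) -> (exists x, B x /\ ~ A x) -> ~ P B.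
Proof.
intros H.
destruct (@classical_sets.Zorn_bigcup T P) as [A [PA HA]].
- intros F FP Ftot. change (P (fun x => exists2 A, F A & A x)). apply H.
  + intros A FA; apply FP. exact FA.
  + intros A B FA FB. destruct (Ftot A B FA FB); [left|right]; intros x; auto.
- exists A; split; [exact PA|]. intros B AB [x [Bx nAx]] PB.
  apply (HA B); [|exact PB]. split; [exact AB|]. intros BA. apply nAx. apply BA. exact Bx.
Qed.

Section HB.
Context {X : Type} (S : VectSpace X) (P : X -> Prop) (HP : is_subspace S P)
  (Q : X -> R -> Prop)
  (Q1 : forall x y c d, P x -> P y -> Q x c -> Q y d -> Q (vadd S x y) (c + d))
  (Q2 : forall x c t, P x -> Q x c -> t > 0 -> Q (vscal S t x) (t * c))
  (Q3 : forall x, P x -> exists c, Q x c)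
  (Q4 : forall c, Q (vzero S) c -> 0 <= c).

Definition validG (G : X * R -> Prop) : Prop :=
  (forall x r, G (x,r) -> P x) /\
  (forall x r r', G (x,r) -> G (x,r') -> r = r') /\
  (forall x r y s, G (x,r) -> G (y,s) -> G (vadd S x y, r+s)) /\
  (forall a x r, G (x,r) -> G (vscal S a x, a*r)) /\
  (forall x r c, G (x,r) -> Q x c -> r <= c).

Lemma P0 : P (vzero S). Proof. apply HP. Qed.
Lemma Padd x y : P x -> P y -> P (vadd S x y). Proof. apply HP. Qed.
Lemma Pscal a x : P x -> P (vscal S a x). Proof. apply HP. Qed.
Lemma Psub x y : P x -> P y -> P (vsub S x y).
Proof. intros. unfold vsub. rewrite vopp_scal. apply Padd; auto. apply Pscal; auto. Qed.

Lemma chain_valid : forall F : (X*R -> Prop) -> Prop, (forall A, F A -> validG A) ->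
     (forall A B, F A -> F B -> (forall x, A x -> B x) \/ (forall x, B x -> A x)) ->
     validG (fun x => exists2 A, F A & A x).
Proof.
intros F FV Ft.
assert (both : forall A B p q, F A -> F B -> A p -> B q ->
   exists C, F C /\ C p /\ C q).
{ intros A B p q FA FB Ap Bq. destruct (Ft A B FA FB) as [h|h].
  - exists B; auto.
  - exists A; auto. }
split; [|split; [|split; [|split]]].
- intros x r [A FA Ax]. destruct (FV A FA) as [h _]. eauto.
- intros x r r' [A FA Ax] [B FB Bx]. destruct (both A B _ _ FA FB Ax Bx) as [C [FC [C1 C2]]].
  destruct (FV C FC) as [_ [h _]]. eauto.
- intros x r y s [A FA Ax] [B FB Bx]. destruct (both A B _ _ FA FB Ax Bx) as [C [FC [C1 C2]]].
  destruct (FV C FC) as [_ [_ [h _]]]. exists C; eauto.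
- intros a x r [A FA Ax]. destruct (FV A FA) as [_ [_ [_ [h _]]]]. exists A; eauto.
- intros x r c [A FA Ax]. destruct (FV A FA) as [_ [_ [_ [_ h]]]]. eauto.
Qed.

Lemma HB_thm : exists phi, is_linear_on S P phi /\ forall x c, P x -> Q x c -> phi x <= c.
Proof.
destruct (my_zorn (X*R) validG chain_valid) as [M [VM maxM]].
destruct VM as [MP [Mfun [Madd [Mscal Mdom]]]].
assert (M00 : M (vzero S, 0)).
{ destruct (classic (exists p, M p)) as [[[x0 r0] H0]|Hn].
  - pose proof (Mscal 0 x0 r0 H0) as h. rewrite vscal_0l, Rmult_0_l in h. exact h.
  - exfalso. apply (maxM (fun p => p = (vzero S, 0))).
    + intros p Mp. exfalso; apply Hn; eauto.
    + exists (vzero S, 0). split; [reflexivity|]. intros h; apply Hn; eauto.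
    + split; [|split; [|split; [|split]]].
      * intros x r h; inversion h; apply P0.
      * intros x r r' h1 h2; inversion h1; inversion h2; subst; reflexivity.
      * intros x r y s h1 h2; inversion h1; inversion h2; subst. rewrite vadd_0. f_equal; ring.
      * intros a x r h; inversion h; subst. rewrite vscal_0r. f_equal; ring.
      * intros x r c h Hq; inversion h; subst. apply Q4; auto. }
assert (total : forall y, P y -> exists r, M (y, r)).
{ intros y Py. apply NNPP; intros Hno.
  set (L := fun t => exists x1 r1 c1, M (x1, r1) /\ Q (vsub S x1 y) c1 /\ t = r1 - c1).
  destruct (Q3 (vadd S (vzero S) y)) as [c0 Hc0]. { apply Padd; auto using P0. }
  destruct (Q3 (vsub S (vzero S) y)) as [c1 Hc1]. { apply Psub; auto using P0. }
  assert (ub : forall x1 r1 c1 x2 r2 c2, M (x1,r1) -> Q (vsub S x1 y) c1 ->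
             M (x2, r2) -> Q (vadd S x2 y) c2 -> r1 - c1 <= c2 - r2).
  { intros x1 r1 d1 x2 r2 d2 H1 H2 H3 H4.
    assert (Hq : Q (vadd S x1 x2) (d1 + d2)).
    { replace (vadd S x1 x2) with (vadd S (vsub S x1 y) (vadd S x2 y)) by (vsolve x1 x2 y).
      apply Q1; auto. apply Psub; eauto. apply Padd; eauto. }
    pose proof (Mdom _ _ _ (Madd _ _ _ _ H1 H3) Hq). lra. }
  destruct (completeness L) as [alpha [Hal1 Hal2]].
  { exists (c0 - 0). intros t [x1 [r1 [d1 [H1 [H2 ->]]]]]. eapply ub; eauto. }
  { exists (0 - c1). exists (vzero S), 0, c1. auto. }
  assert (Hal3 : forall x2 r2 c2, M (x2, r2) -> Q (vadd S x2 y) c2 -> alpha <= c2 - r2).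
  { intros x2 r2 c2 H3 H4. apply Hal2. intros t [x1 [r1 [d1 [H1 [H2 ->]]]]]. eapply ub; eauto. }
  set (B := fun p => exists x rx s, M (x, rx) /\ fst p = vadd S x (vscal S s y)
                                    /\ snd p = rx + s * alpha).
  apply (maxM B).
  - intros [x r] Mx. exists x, r, 0. split; [exact Mx|]. simpl. split.
    + rewrite vscal_0l, vadd_0r; reflexivity.
    + ring.
  - exists (y, alpha). split.
    + exists (vzero S), 0, 1. simpl. split; [exact M00|]. split; [vsolve y|ring].
    + intros h. apply Hno. eauto.
  - split; [|split; [|split; [|split]]].
    + intros z r [x [rx [s [H1 [H2 H3]]]]]. simpl in H2. subst z.
      apply Padd; [eauto|apply Pscal; auto].
    + intros z r r' [x [rx [s [H1 [H2 H3]]]]] [x' [rx' [s' [H1' [H2' H3']]]]].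
      simpl in *. subst r r'. rewrite H2 in H2'.
      destruct (Req_dec s s') as [e|ne].
      * subst s'. assert (x = x').
        { apply (vadd_cancel S (vscal S s y)). rewrite (vadd_comm _ S _ x), (vadd_comm _ S _ x').
          exact H2'. }
        subst x'. rewrite (Mfun _ _ _ H1 H1'). reflexivity.
      * exfalso. apply Hno.
        assert (ey : y = vscal S (/(s - s')) (vsub S x' x)).
        { transitivity (vscal S (/(s - s')) (vsub S (vadd S x (vscal S s y)) (vadd S x (vscal S s' y)))).
          { vsolve y x. field. intros h; apply ne; lra. }
          rewrite H2'. vsolve x x' y. }
        exists (/(s - s') * (rx' + (-1) * rx)). rewrite ey.
        apply Mscal. unfold vsub. rewrite vopp_scal. apply Madd; auto.
    + intros z r z' r' [x [rx [s [H1 [H2 H3]]]]] [x' [rx' [s' [H1' [H2' H3']]]]].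
      simpl in *. exists (vadd S x x'), (rx + rx'), (s + s'). simpl.
      split; [auto|]. split; [rewrite H2, H2'; vsolve x x' y|rewrite H3, H3'; ring].
    + intros a z r [x [rx [s [H1 [H2 H3]]]]]. simpl in *.
      exists (vscal S a x), (a * rx), (a * s). simpl.
      split; [auto|]. split; [rewrite H2; vsolve x y|rewrite H3; ring].
    + intros z r c [x [rx [s [H1 [H2 H3]]]]] Hq. simpl in *. subst z r.
      assert (Px : P x) by eauto.
      assert (Pz : P (vadd S x (vscal S s y))) by (apply Padd; auto; apply Pscal; auto).
      destruct (Rtotal_order s 0) as [sn|[s0|sp]].
      * pose proof (Q2 _ _ (/ (-s)) Pz Hq) as h.
        assert (e : vscal S (/(-s)) (vadd S x (vscal S s y)) = vsub S (vscal S (/(-s)) x) y).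
        { vsolve x y. field. lra. }
        rewrite e in h. clear e.
        assert (h2 := Hal1 (/(-s) * rx - / (-s) * c)).
        assert (h3 : / (-s) * rx - / (-s) * c <= alpha).
        { apply h2. exists (vscal S (/(-s)) x), (/(-s) * rx), (/(-s) * c). split; auto.
          split; auto. apply h. apply Rlt_gt, Rinv_0_lt_compat; lra. }
        assert (h4 : rx - c <= (-s) * alpha).
        { replace (rx - c) with ((-s) * (/ (-s) * rx - / (-s) * c)) by (field; lra).
          apply Rmult_le_compat_l; lra. }
        lra.
      * subst s. rewrite vscal_0l, vadd_0r in Hq. pose proof (Mdom _ _ _ H1 Hq). lra.
      * pose proof (Q2 _ _ (/ s) Pz Hq) as h.
        assert (e : vscal S (/s) (vadd S x (vscal S s y)) = vadd S (vscal S (/s) x) y).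
        { vsolve x y. field. lra. }
        rewrite e in h. clear e.
        assert (h3 : alpha <= / s * c - / s * rx).
        { apply (Hal3 (vscal S (/s) x)); auto. apply h. apply Rlt_gt, Rinv_0_lt_compat; lra. }
        assert (h4 : s * alpha <= c - rx).
        { replace (c - rx) with (s * (/ s * c - / s * rx)) by (field; lra).
          apply Rmult_le_compat_l; lra. }
        lra. }
exists (fun x => epsilon (inhabits 0) (fun r => M (x, r))).
assert (Hspec : forall x, P x -> M (x, epsilon (inhabits 0) (fun r => M (x, r)))).
{ intros x Px. apply epsilon_spec. apply total; auto. }
split; [split|].
- intros x y Px Py. apply (Mfun (vadd S x y)).
  + apply Hspec. apply Padd; auto.
  + apply Madd; apply Hspec; auto.
- intros a x Px. apply (Mfun (vscal S a x)).
  + apply Hspec. apply Pscal; auto.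
  + apply Mscal; apply Hspec; auto.
- intros x c Px Hq. eapply Mdom; eauto.
Qed.

End HB.


Lemma Rabs_m1 : Rabs (-1) = 1.
Proof. rewrite Rabs_left; lra. Qed.
Lemma Rabs_le_between a b : Rabs a <= b -> -b <= a <= b.
Proof. unfold Rabs; destruct (Rcase_abs a); intros; lra. Qed.
Section Norm.
Context {X : Type} (S : VectSpace X) (P : X -> Prop) (n : X -> R)
  (HP : is_subspace S P) (Hn : is_norm_on S P n).

Lemma n_ge0 x : P x -> 0 <= n x. Proof. apply Hn. Qed.
Lemma n_zero : n (vzero S) = 0.
Proof.
destruct Hn as [_ [_ [h _]]]. rewrite <- (vscal_0l S (vzero S)), h.
- rewrite Rabs_R0; ring.
- apply HP.
Qed.
Lemma n_tri x y : P x -> P y -> n (vadd S x y) <= n x + n y. Proof. apply Hn. Qed.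
Lemma n_scal a x : P x -> n (vscal S a x) = Rabs a * n x. Proof. apply Hn. Qed.
Lemma n_def x : P x -> n x = 0 -> x = vzero S. Proof. apply Hn. Qed.
Lemma n_sym x y : P x -> P y -> n (vsub S x y) = n (vsub S y x).
Proof.
intros. replace (vsub S y x) with (vscal S (-1) (vsub S x y)) by (vsolve x y).
rewrite n_scal. - rewrite Rabs_m1; ring. - apply (Psub S P HP); auto.
Qed.
Lemma n_opp x : P x -> n (vscal S (-1) x) = n x.
Proof. intros. rewrite n_scal; auto. rewrite Rabs_m1; ring. Qed.
End Norm.

Definition seqVS : VectSpace (nat -> R).
refine {| vzero := fun _ => 0; vadd := fun a b k => a k + b k; vopp := fun a k => - a k;
          vscal := fun t a k => t * a k |};
intros; apply functional_extensionality; intros; simpl; ring.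
Defined.

Definition bnd (a : nat -> R) := exists B, forall k, Rabs (a k) <= B.

Lemma bnd_sub : is_subspace seqVS bnd.
Proof.
split; [|split].
- exists 0. intros; simpl. rewrite Rabs_R0; lra.
- intros x y [B1 h1] [B2 h2]. exists (B1 + B2). intros k. simpl.
  eapply Rle_trans; [apply Rabs_triang|]. specialize (h1 k); specialize (h2 k); lra.
- intros a x [B h]. exists (Rabs a * B). intros k; simpl. rewrite Rabs_mult.
  apply Rmult_le_compat_l; [apply Rabs_pos|auto].
Qed.

Definition evle (a : nat -> R) (c : R) := exists N, forall k, (k >= N)%nat -> a k <= c.

Lemma Lam_exists : exists Lam : (nat -> R) -> R,
  is_linear_on seqVS bnd Lam /\ forall a c, bnd a -> evle a c -> Lam a <= c.
Proof.
apply (HB_thm seqVS bnd bnd_sub evle).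
- intros x y c d _ _ [N1 h1] [N2 h2]. exists (max N1 N2). intros k hk. simpl.
  assert (x k <= c) by (apply h1; lia). assert (y k <= d) by (apply h2; lia). lra.
- intros x c t _ [N h] ht. exists N. intros k hk. simpl.
  apply Rmult_le_compat_l; [lra| auto].
- intros x [B h]. exists B. exists 0%nat. intros k _. specialize (h k).
  eapply Rle_trans; [apply Rle_abs|exact h].
- intros c [N h]. specialize (h N (le_n N)). simpl in h. exact h.
Qed.

Definition Lam : (nat -> R) -> R := epsilon (inhabits (fun _ => 0))
  (fun L => is_linear_on seqVS bnd L /\ forall a c, bnd a -> evle a c -> L a <= c).

Lemma Lam_spec : is_linear_on seqVS bnd Lam /\ forall a c, bnd a -> evle a c -> Lam a <= c.
Proof. unfold Lam. apply epsilon_spec. apply Lam_exists. Qed.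

Lemma Lam_add a b : bnd a -> bnd b -> Lam (fun k => a k + b k) = Lam a + Lam b.
Proof. intros. destruct Lam_spec as [[h _] _]. apply (h a b); auto. Qed.
Lemma Lam_scal t a : bnd a -> Lam (fun k => t * a k) = t * Lam a.
Proof. intros. destruct Lam_spec as [[_ h] _]. apply (h t a); auto. Qed.
Lemma Lam_le a c N : bnd a -> (forall k, (k >= N)%nat -> a k <= c) -> Lam a <= c.
Proof. intros. destruct Lam_spec as [_ h]. apply h; auto. exists N; auto. Qed.
Lemma Lam_abs a c : (forall k, Rabs (a k) <= c) -> Rabs (Lam a) <= c.
Proof.
intros h. assert (ba : bnd a) by (exists c; auto).
apply Rabs_le. split.
- assert (Lam (fun k => -1 * a k) <= c).
  { apply (Lam_le _ _ 0).
    - destruct (bnd_sub) as [_ [_ hs]]. apply (hs (-1) a ba).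
    - intros k _. specialize (h k). apply Rabs_le_between in h. lra. }
  rewrite Lam_scal in H; auto. lra.
- apply (Lam_le _ _ 0); auto. intros k _. specialize (h k). apply Rabs_le_between in h. lra.
Qed.

Lemma dual_bnd {X} (S : VectSpace X) P n (Hn : is_norm_on S P n) phi (xs : nat -> X) B :
  is_dual_elt S P n phi -> (forall k, P (xs k)) -> (forall k, n (xs k) <= B) ->
  bnd (fun k => phi (xs k)).
Proof.
intros [_ [M hM]] Pk Bk. exists (Rabs M * B). intros k.
eapply Rle_trans; [apply hM; auto|].
assert (0 <= n (xs k)) by (apply Hn; auto).
eapply Rle_trans; [apply Rmult_le_compat_r; [auto|apply Rle_abs]|].
apply Rmult_le_compat_l; [apply Rabs_pos| auto].
Qed.

Lemma weak_limit {X} (S : VectSpace X) P n (HB : is_Banach S P n) (HR : is_reflexive S P n)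
  (xs : nat -> X) B : (forall k, P (xs k)) -> (forall k, n (xs k) <= B) ->
  exists x, P x /\ forall phi, is_dual_elt S P n phi -> phi x = Lam (fun k => phi (xs k)).
Proof.
intros Pk Bk. destruct HB as [HP [Hn _]].
destruct (classic (exists k, n (xs k) > 0)) as [[k0 hk0]|hno].
- destruct (HR (fun phi => Lam (fun k => phi (xs k)))) as [x [Px hx]].
  + split; [|split; [|split]].
    * intros phi psi _ h. f_equal. apply functional_extensionality; intros k. apply h; auto.
    * intros phi psi h1 h2. apply Lam_add; eapply dual_bnd; eauto.
    * intros a phi h. apply Lam_scal; eapply dual_bnd; eauto.
    * exists B. intros phi M _ hM.
      assert (M0 : 0 <= M).
      { specialize (hM (xs k0) (Pk k0)). pose proof (Rabs_pos (phi (xs k0))).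
        destruct (Rle_or_lt 0 M) as [|hlt]; auto.
        assert (M * n (xs k0) < 0) by (apply Rmult_neg_pos; lra). lra. }
      rewrite Rmult_comm. apply Lam_abs. intros k. eapply Rle_trans; [apply hM; auto|].
      apply Rmult_le_compat_l; auto.
  + exists x. split; auto. intros phi h. symmetry. apply hx; auto.
- exists (vzero S). split; [apply HP|]. intros phi [[_ hs] _].
  assert (z : forall k, xs k = vzero S).
  { intros k. apply (n_def S P n Hn); auto. apply Rle_antisym.
    - apply Rnot_lt_le. intros h; apply hno; exists k; lra.
    - apply Hn; auto. }
  assert (p0 : phi (vzero S) = 0).
  { rewrite <- (vscal_0l S (vzero S)). rewrite hs; [ring|apply HP]. }
  replace (fun k => phi (xs k)) with (fun k : nat => 0 * 0).
  + rewrite (Lam_scal 0 (fun _ => 0)). * rewrite p0; ring. * exists 0; intros; rewrite Rabs_R0; lra.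
  + apply functional_extensionality; intros k. rewrite z, p0. ring.
Qed.

Definition convexS {X} (S : VectSpace X) (C : X -> Prop) :=
  forall u v t, C u -> C v -> 0 <= t <= 1 -> C (vadd S (vscal S t u) (vscal S (1 - t) v)).

Lemma separation {X} (S : VectSpace X) P n (HP : is_subspace S P) (Hn : is_norm_on S P n)
  (C : X -> Prop) z d :
  (forall s, C s -> P s) -> (exists s, C s) -> convexS S C -> P z -> d > 0 ->
  (forall s, C s -> d <= n (vsub S s z)) ->
  exists phi, is_linear_on S P phi /\ (forall x, P x -> Rabs (phi x) <= n x) /\
     forall s, C s -> phi s <= phi z - d.
Proof.
intros CP [s0 Cs0] Cc Pz dpos Cd.
set (Q := fun w c => P w /\ exists t s, 0 <= t /\ C s /\
            n (vsub S w (vscal S t (vsub S s z))) - t * d <= c).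
assert (Pv : forall t s, C s -> P (vscal S t (vsub S s z))).
{ intros. apply (Pscal S P HP). apply (Psub S P HP); auto. }
destruct (HB_thm S P HP Q) as [phi [lin dom]].
- intros w1 w2 c1 c2 P1 P2 [_ [t1 [s1 [t1p [C1 h1]]]]] [_ [t2 [s2 [t2p [C2 h2]]]]].
  split; [apply (Padd S P HP); auto|].
  destruct (Req_dec (t1 + t2) 0) as [e|ne].
  + assert (t1 = 0) by lra. assert (t2 = 0) by lra. subst t1 t2.
    exists 0, s1. split; [lra|]. split; auto.
    replace (vsub S (vadd S w1 w2) (vscal S 0 (vsub S s1 z))) with
      (vadd S (vsub S w1 (vscal S 0 (vsub S s1 z))) (vsub S w2 (vscal S 0 (vsub S s2 z))))
      by (vsolve w1 w2 s1 s2 z).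
    eapply Rle_trans; [|apply (Rplus_le_compat _ _ _ _ h1 h2)].
    pose proof (n_tri S P n Hn (vsub S w1 (vscal S 0 (vsub S s1 z))) (vsub S w2 (vscal S 0 (vsub S s2 z)))) as T.
    assert (P (vsub S w1 (vscal S 0 (vsub S s1 z)))) by (apply (Psub S P HP); auto).
    assert (P (vsub S w2 (vscal S 0 (vsub S s2 z)))) by (apply (Psub S P HP); auto).
    specialize (T H H0). lra.
  + set (T := t1 + t2). set (u := t1 / T).
    assert (Tp : T > 0) by (unfold T; lra).
    exists T, (vadd S (vscal S u s1) (vscal S (1 - u) s2)). split; [lra|]. split.
    * apply Cc; auto. unfold u. split.
      -- apply Rmult_le_pos; [lra|left; apply Rinv_0_lt_compat; lra].
      -- apply (Rmult_le_reg_r T); [lra|]. unfold Rdiv. rewrite Rmult_assoc, Rinv_l; [|lra]. unfold T; lra.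
    * replace (vsub S (vadd S w1 w2) (vscal S T (vsub S (vadd S (vscal S u s1) (vscal S (1 - u) s2)) z)))
        with (vadd S (vsub S w1 (vscal S t1 (vsub S s1 z))) (vsub S w2 (vscal S t2 (vsub S s2 z)))).
      2:{ vsolve w1 w2 s1 s2 z; unfold u, T; field; lra. }
      assert (P (vsub S w1 (vscal S t1 (vsub S s1 z)))) by (apply (Psub S P HP); auto).
      assert (P (vsub S w2 (vscal S t2 (vsub S s2 z)))) by (apply (Psub S P HP); auto).
      pose proof (n_tri S P n Hn _ _ H H0). unfold T. lra.
- intros w c t Pw [_ [t1 [s1 [t1p [C1 h1]]]]] tp. split; [apply (Pscal S P HP); auto|].
  exists (t * t1), s1. split; [apply Rmult_le_pos; lra|]. split; auto.
  replace (vsub S (vscal S t w) (vscal S (t * t1) (vsub S s1 z))) with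
     (vscal S t (vsub S w (vscal S t1 (vsub S s1 z)))) by (vsolve w s1 z).
  rewrite (n_scal S P n Hn). 2:{ apply (Psub S P HP); auto. }
  rewrite Rabs_right by lra.
  replace (t * n (vsub S w (vscal S t1 (vsub S s1 z))) - t * t1 * d) with
     (t * (n (vsub S w (vscal S t1 (vsub S s1 z))) - t1 * d)) by ring.
  apply Rmult_le_compat_l; lra.
- intros w Pw. exists (n (vsub S w (vscal S 0 (vsub S s0 z))) - 0 * d). split; auto.
  exists 0, s0. split; [lra|]. split; auto. lra.
- intros c [_ [t [s [tp [Cs h]]]]].
  replace (vsub S (vzero S) (vscal S t (vsub S s z))) with (vscal S (- t) (vsub S s z)) in h
    by (vsolve s z).
  rewrite (n_scal S P n Hn) in h. 2:{ apply (Psub S P HP); auto. }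
  rewrite Rabs_Ropp, Rabs_right in h by lra.
  specialize (Cd s Cs). assert (t * d <= t * n (vsub S s z)) by (apply Rmult_le_compat_l; lra). lra.
- exists phi. split; [exact lin|]. split.
  + intros x Px. assert (hx : forall y, P y -> phi y <= n y).
    { intros y Py. apply dom; auto. split; auto. exists 0, s0. split; [lra|]. split; auto.
      replace (vsub S y (vscal S 0 (vsub S s0 z))) with y by (vsolve y s0 z). lra. }
    apply Rabs_le. split.
    * destruct lin as [_ hs]. pose proof (hx (vscal S (-1) x)) as h.
      rewrite hs in h by auto. rewrite (n_opp S P n Hn) in h by auto.
      assert (P (vscal S (-1) x)) by (apply (Pscal S P HP); auto). specialize (h H). lra.
    * auto.
  + intros s Cs. destruct lin as [ha hs].
    assert (h : phi (vsub S s z) <= - d).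
    { apply dom. { apply (Psub S P HP); auto. } split; [apply (Psub S P HP); auto|].
      exists 1, s. split; [lra|]. split; auto.
      replace (vsub S (vsub S s z) (vscal S 1 (vsub S s z))) with (vzero S) by (vsolve s z).
      rewrite (n_zero S P n HP Hn). lra. }
    unfold vsub in h. rewrite ha in h. 2: auto. 2:{ rewrite vopp_scal; apply (Pscal S P HP); auto. }
    rewrite vopp_scal, hs in h by auto. lra.
Qed.


Definition prodVS {A B} (SA : VectSpace A) (SB : VectSpace B) : VectSpace (A * B).
refine {| vzero := (vzero SA, vzero SB);
          vadd := fun p q => (vadd SA (fst p) (fst q), vadd SB (snd p) (snd q));
          vopp := fun p => (vopp SA (fst p), vopp SB (snd p));
          vscal := fun t p => (vscal SA t (fst p), vscal SB t (snd p)) |};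
intros; repeat match goal with p : (_ * _)%type |- _ => destruct p end; simpl; f_equal;
  first [apply vadd_assoc | apply vadd_comm | apply vadd_0 | apply vadd_opp | apply vscal_assoc
        | apply vscal_1 | apply vscal_addr | apply vscal_addl].
Defined.

Lemma archi_small eps : eps > 0 -> exists N : nat, forall k, (k >= N)%nat -> / (INR k + 1) < eps.
Proof.
intros he. destruct (archimed_cor1 eps he) as [N [h1 h2]]. exists N. intros k hk.
apply lt_INR in h2. simpl in h2.
assert (INR N <= INR k) by (apply le_INR; lia).
eapply Rle_lt_trans; [|exact h1]. apply Rinv_le_contravar; lra.
Qed.

Lemma le_lim x m : (forall k, x <= m + / (INR k + 1)) -> x <= m.
Proof.
intros h. apply Rnot_lt_le. intros hl. destruct (archi_small (x - m)) as [N hN]; [lra|].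
specialize (hN N (le_n N)). specialize (h N). lra.
Qed.

Lemma cv_small (a : nat -> R) : (forall i, 0 <= a i < / (INR i + 1)) -> Un_cv a 0.
Proof.
intros h eps he. destruct (archi_small eps he) as [N hN]. exists N. intros k hk.
unfold R_dist. rewrite Rminus_0_r, Rabs_right by (specialize (h k); lra).
specialize (h k); specialize (hN k hk); lra.
Qed.

Lemma inv_pos k : 0 < / (INR k + 1).
Proof. apply Rinv_0_lt_compat. pose proof (pos_INR k); lra. Qed.

Lemma inv_mono k N : (k >= N)%nat -> / (INR k + 1) <= / (INR N + 1).
Proof.
intros h. apply Rinv_le_contravar. - pose proof (pos_INR N); lra.
- apply le_INR in h. lra.
Qed.

Section Core.
Context (U : GradientSpace).
Notation V := (VS U). Notation W := (WS U).

Lemma HVP : is_subspace V (Vp U). Proof. apply (proj1 (GS1 U)). Qed.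
Lemma HWP : is_subspace W (Wp U). Proof. apply (proj1 (GS2 U)). Qed.
Lemma HVn : is_norm_on V (Vp U) (nV U). Proof. apply (proj1 (GS1 U)). Qed.
Lemma HWn : is_norm_on W (Wp U) (nW U). Proof. apply (proj1 (GS2 U)). Qed.

Lemma core (Ss : Vt U -> Wt U -> Prop) :
  (forall v g, Ss v g -> Vp U v /\ Wp U g) ->
  (exists v g, Ss v g) ->
  (forall v1 g1 v2 g2 t, Ss v1 g1 -> Ss v2 g2 -> 0 <= t <= 1 ->
     Ss (vadd V (vscal V t v1) (vscal V (1 - t) v2)) (vadd W (vscal W t g1) (vscal W (1 - t) g2))) ->
  (forall vs gs v g, (forall i, Ss (vs i) (gs i)) -> Vp U v -> Wp U g ->
     Un_cv (fun i => nV U (vsub V (vs i) v)) 0 -> Un_cv (fun i => nW U (vsub W (gs i) g)) 0 ->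
     Ss v g) ->
  (forall r, exists B, forall v g, Ss v g -> nW U g <= r -> nV U v <= B) ->
  exists v g, Ss v g /\ forall v' g', Ss v' g' -> nW U g <= nW U g'.
Proof.
intros SP [v0 [g0 S0]] Sconv Sclos Sbnd.
set (E := fun t => exists v g, Ss v g /\ t = - nW U g).
destruct (completeness E) as [L [L1 L2]].
{ exists 0. intros t [v [g [h ->]]]. pose proof (n_ge0 W (Wp U) (nW U) HWn g (proj2 (SP _ _ h))). lra. }
{ exists (- nW U g0). exists v0, g0. auto. }
set (m := - L).
assert (mlow : forall v g, Ss v g -> m <= nW U g).
{ intros v g h. unfold m. assert (E (- nW U g)) by (exists v, g; auto). specialize (L1 _ H). lra. }
assert (mapp : forall eps, eps > 0 -> exists v g, Ss v g /\ nW U g < m + eps).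
{ intros eps he. apply NNPP. intros hn.
  assert (L <= L - eps); [|lra]. apply L2. intros t [v [g [h ->]]].
  apply Rnot_lt_le. intros hl. apply hn. exists v, g. split; auto. unfold m. lra. }
assert (seqx : forall k : nat, {p : Vt U * Wt U | Ss (fst p) (snd p) /\ nW U (snd p) < m + / (INR k + 1)}).
{ intros k. apply constructive_indefinite_description.
  destruct (mapp (/ (INR k + 1)) (inv_pos k)) as [v [g h]]. exists (v, g). exact h. }
set (vs := fun k => fst (proj1_sig (seqx k))).
set (gs := fun k => snd (proj1_sig (seqx k))).
assert (Sk : forall k, Ss (vs k) (gs k) /\ nW U (gs k) < m + / (INR k + 1)).
{ intros k. unfold vs, gs. apply (proj2_sig (seqx k)). }
assert (Pvk : forall k, Vp U (vs k)) by (intros k; apply (SP _ _ (proj1 (Sk k)))).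
assert (Pgk : forall k, Wp U (gs k)) by (intros k; apply (SP _ _ (proj1 (Sk k)))).
destruct (Sbnd (m + 1)) as [B hB].
assert (Bv : forall k, nV U (vs k) <= B).
{ intros k. apply (hB _ (gs k)). apply Sk. destruct (Sk k) as [_ h].
  pose proof (inv_mono k 0 ltac:(lia)). simpl in H. rewrite Rplus_0_l, Rinv_1 in H. lra. }
assert (Bg : forall k, nW U (gs k) <= m + 1).
{ intros k. destruct (Sk k) as [_ h].
  pose proof (inv_mono k 0 ltac:(lia)). simpl in H. rewrite Rplus_0_l, Rinv_1 in H. lra. }
destruct (weak_limit V (Vp U) (nV U) (proj1 (GS1 U)) (proj2 (GS1 U)) vs B Pvk Bv) as [v [Pv hv]].
destruct (weak_limit W (Wp U) (nW U) (proj1 (GS2 U)) (proj1 (proj2 (GS2 U))) gs (m+1) Pgk Bg) as [g [Pg hg]].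
set (Sn := fun (N : nat) v' g' => Ss v' g' /\ nW U g' <= m + / (INR N + 1)).
assert (inSn : forall N, Sn N v g).
{ intros N. apply NNPP. intros hnot.
  assert (hd : exists d, d > 0 /\ forall v' g', Sn N v' g' -> d <= nV U (vsub V v' v) + nW U (vsub W g' g)).
  { apply NNPP. intros hn.
    assert (cl : forall i : nat, exists p : Vt U * Wt U, Sn N (fst p) (snd p) /\
               nV U (vsub V (fst p) v) + nW U (vsub W (snd p) g) < / (INR i + 1)).
    { intros i. apply NNPP. intros hi. apply hn. exists (/ (INR i + 1)). split; [apply inv_pos|].
      intros v' g' h. apply Rnot_lt_le. intros hl. apply hi. exists (v', g'). auto. }
    assert (cl' : forall i : nat, {p : Vt U * Wt U | Sn N (fst p) (snd p) /\
               nV U (vsub V (fst p) v) + nW U (vsub W (snd p) g) < / (INR i + 1)}).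
    { intros i; apply constructive_indefinite_description; auto. }
    set (ws := fun i => fst (proj1_sig (cl' i))).
    set (hs := fun i => snd (proj1_sig (cl' i))).
    assert (Hi : forall i, Sn N (ws i) (hs i) /\
                  nV U (vsub V (ws i) v) + nW U (vsub W (hs i) g) < / (INR i + 1)).
    { intros i. unfold ws, hs. apply (proj2_sig (cl' i)). }
    assert (Pw : forall i, Vp U (ws i)) by (intros i; apply (SP _ _ (proj1 (proj1 (Hi i))))).
    assert (Ph : forall i, Wp U (hs i)) by (intros i; apply (SP _ _ (proj1 (proj1 (Hi i))))).
    assert (nn1 : forall i, 0 <= nV U (vsub V (ws i) v))
      by (intros; apply (n_ge0 V (Vp U) (nV U) HVn); apply (Psub V (Vp U) HVP); auto).
    assert (nn2 : forall i, 0 <= nW U (vsub W (hs i) g))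
      by (intros; apply (n_ge0 W (Wp U) (nW U) HWn); apply (Psub W (Wp U) HWP); auto).
    assert (Svg : Ss v g).
    { apply (Sclos ws hs); auto.
      - intros i; apply Hi.
      - apply cv_small. intros i. specialize (Hi i). specialize (nn1 i); specialize (nn2 i). lra.
      - apply cv_small. intros i. specialize (Hi i). specialize (nn1 i); specialize (nn2 i). lra. }
    apply hnot. split; auto.
    apply le_lim. intros i. destruct (Hi i) as [[_ hb] hc].
    assert (nW U g <= nW U (hs i) + nW U (vsub W (hs i) g)).
    { replace g with (vadd W (hs i) (vscal W (-1) (vsub W (hs i) g))) at 1 by (vsolve g (hs i)).
      eapply Rle_trans. apply (n_tri W (Wp U) (nW U) HWn). auto.
      apply (Pscal W (Wp U) HWP). apply (Psub W (Wp U) HWP); auto.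
      rewrite (n_opp W (Wp U) (nW U) HWn). lra. apply (Psub W (Wp U) HWP); auto. }
    specialize (nn1 i). lra. }
  destruct hd as [d [dpos hd]].
  set (PV := prodVS V W).
  set (PP := fun p : Vt U * Wt U => Vp U (fst p) /\ Wp U (snd p)).
  set (PN := fun p : Vt U * Wt U => nV U (fst p) + nW U (snd p)).
  assert (PPs : is_subspace PV PP).
  { split; [|split].
    - split; simpl; [apply HVP|apply HWP].
    - intros [a b] [c e] [h1 h2] [h3 h4]. split; simpl; [apply (Padd V _ HVP)|apply (Padd W _ HWP)]; auto.
    - intros t [a b] [h1 h2]. split; simpl; [apply (Pscal V _ HVP)|apply (Pscal W _ HWP)]; auto. }
  assert (PNn : is_norm_on PV PP PN).
  { split; [|split; [|split]].
    - intros [a b] [h1 h2]. unfold PN; simpl.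
      pose proof (n_ge0 V _ _ HVn a h1). pose proof (n_ge0 W _ _ HWn b h2). lra.
    - intros [a b] [h1 h2] h. unfold PN in h; simpl in h.
      pose proof (n_ge0 V _ _ HVn a h1). pose proof (n_ge0 W _ _ HWn b h2).
      unfold PV, prodVS; simpl. f_equal; [apply (n_def V _ _ HVn)|apply (n_def W _ _ HWn)]; auto; lra.
    - intros t [a b] [h1 h2]. unfold PN; simpl.
      rewrite (n_scal V _ _ HVn), (n_scal W _ _ HWn); auto. ring.
    - intros [a b] [c e] [h1 h2] [h3 h4]. unfold PN; simpl.
      pose proof (n_tri V _ _ HVn a c h1 h3). pose proof (n_tri W _ _ HWn b e h2 h4). lra. }
  destruct (separation PV PP PN PPs PNn (fun p => Sn N (fst p) (snd p)) (v, g) d) as [Phi [[Pa Ps] [Pb Pc]]].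
  - intros [a b] h. apply (SP _ _ (proj1 h)).
  - exists (vs N, gs N). split; simpl; [apply Sk|]. left; apply Sk.
  - intros [a1 b1] [a2 b2] t [h1 h2] [h3 h4] ht. simpl in *. split.
    + apply Sconv; auto.
    + assert (P1 : Wp U b1) by (apply (SP _ _ h1)). assert (P2 : Wp U b2) by (apply (SP _ _ h3)).
      eapply Rle_trans. apply (n_tri W _ _ HWn); apply (Pscal W _ HWP); auto.
      rewrite !(n_scal W _ _ HWn) by auto. rewrite !Rabs_right by lra.
      replace (m + / (INR N + 1)) with (t * (m + / (INR N + 1)) + (1 - t) * (m + / (INR N + 1))) by ring.
      apply Rplus_le_compat; apply Rmult_le_compat_l; lra.
  - split; simpl; auto.
  - exact dpos.
  - intros [a b] h. apply hd. exact h.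
  - set (phi := fun a => Phi (a, vzero W)).
    set (psi := fun b => Phi (vzero V, b)).
    assert (Hsplit : forall a b, Vp U a -> Wp U b -> Phi (a, b) = phi a + psi b).
    { intros a b ha hb. unfold phi, psi.
      replace (a, b) with (vadd PV (a, vzero W) (vzero V, b)).
      - apply Pa; split; simpl; auto; [apply HWP|apply HVP].
      - unfold PV, prodVS; simpl. rewrite vadd_0, vadd_0r. reflexivity. }
    assert (dphi : is_dual_elt V (Vp U) (nV U) phi).
    { split; [split|].
      - intros x y hx hy. unfold phi. rewrite <- Pa. 2,3: split; simpl; auto; apply HWP.
        unfold PV, prodVS; simpl. rewrite vadd_0. reflexivity.
      - intros t x hx. unfold phi. rewrite <- Ps. 2: split; simpl; auto; apply HWP.
        unfold PV, prodVS; simpl. rewrite vscal_0r. reflexivity.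
      - exists 1. intros x hx. unfold phi. eapply Rle_trans. apply Pb. split; simpl; auto; apply HWP.
        unfold PN; simpl. rewrite (n_zero W _ _ HWP HWn). lra. }
    assert (dpsi : is_dual_elt W (Wp U) (nW U) psi).
    { split; [split|].
      - intros x y hx hy. unfold psi. rewrite <- Pa. 2,3: split; simpl; auto; apply HVP.
        unfold PV, prodVS; simpl. rewrite vadd_0. reflexivity.
      - intros t x hx. unfold psi. rewrite <- Ps. 2: split; simpl; auto; apply HVP.
        unfold PV, prodVS; simpl. rewrite vscal_0r. reflexivity.
      - exists 1. intros x hx. unfold psi. eapply Rle_trans. apply Pb. split; simpl; auto; apply HVP.
        unfold PN; simpl. rewrite (n_zero V _ _ HVP HVn). lra. }
    assert (b1 := dual_bnd V _ _ HVn phi vs B dphi Pvk Bv).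
    assert (b2 := dual_bnd W _ _ HWn psi gs (m+1) dpsi Pgk Bg).
    assert (hle : Lam (fun k => phi (vs k) + psi (gs k)) <= phi v + psi g - d).
    { apply (Lam_le _ _ N).
      - destruct bnd_sub as [_ [ha _]]. apply (ha _ _ b1 b2).
      - intros k hk. rewrite <- (Hsplit v g), <- (Hsplit (vs k) (gs k)); auto.
        apply (Pc (vs k, gs k)). split; simpl; [apply Sk|].
        destruct (Sk k) as [_ h]. pose proof (inv_mono k N hk). lra. }
    rewrite Lam_add in hle; auto. rewrite <- hv, <- hg in hle; auto. lra. }
exists v, g. split; [apply (inSn 0%nat)|].
assert (gm : nW U g <= m). { apply le_lim. intros k. apply (inSn k). }
intros v' g' h. specialize (mlow _ _ h). lra.
Qed.

End Core.


Lemma cv_ext (a b : nat -> R) l : (forall i, a i = b i) -> Un_cv a l -> Un_cv b l.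
Proof. intros h H eps he. destruct (H eps he) as [N hN]. exists N. intros k hk. rewrite <- h. auto. Qed.

Section Main.
Context (U : GradientSpace).
Notation V := (VS U). Notation W := (WS U).

Lemma Rel_comb v1 g1 v2 g2 t : Rel U v1 g1 -> Rel U v2 g2 -> 0 <= t <= 1 ->
  Rel U (vadd V (vscal V t v1) (vscal V (1 - t) v2)) (vadd W (vscal W t g1) (vscal W (1 - t) g2)).
Proof.
intros h1 h2 ht.
destruct (Req_dec t 0) as [e|n0].
- subst t. replace (vadd V (vscal V 0 v1) (vscal V (1 - 0) v2)) with v2 by (vsolve v1 v2).
  replace (vadd W (vscal W 0 g1) (vscal W (1 - 0) g2)) with g2 by (vsolve g1 g2). auto.
- destruct (Req_dec t 1) as [e|n1].
  + subst t. replace (vadd V (vscal V 1 v1) (vscal V (1 - 1) v2)) with v1 by (vsolve v1 v2).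
    replace (vadd W (vscal W 1 g1) (vscal W (1 - 1) g2)) with g1 by (vsolve g1 g2). auto.
  + apply G1; apply G2; auto; lra.
Qed.

Lemma min_grad_exists w : Sob U w -> exists gw, is_min_grad U w gw.
Proof.
intros [Pw [g0 [Pg0 R0]]].
destruct (core U (fun v g => v = w /\ Wp U g /\ Rel U w g)) as [v [g [[-> [hg1 hg2]] hmin]]].
- intros v g [-> [h1 _]]. auto.
- exists w, g0. auto.
- intros v1 g1 v2 g2 t [-> [a1 b1]] [-> [a2 b2]] ht. split; [vsolve w|].
  split. + apply (Padd W _ (HWP U)); apply (Pscal W _ (HWP U)); auto.
  + pose proof (Rel_comb w g1 w g2 t b1 b2 ht) as h.
    replace (vadd V (vscal V t w) (vscal V (1 - t) w)) with w in h by (vsolve w). exact h.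
- intros vs gs v g hs Pv Pg cv cg.
  assert (ev : forall i, vs i = w) by (intros i; apply hs).
  assert (v = w).
  { assert (nz : nV U (vsub V w v) = 0).
    { apply NNPP. intros hne. assert (hp : 0 < nV U (vsub V w v)).
      { pose proof (n_ge0 V _ _ (HVn U) (vsub V w v) (Psub V _ (HVP U) _ _ Pw Pv)). lra. }
      destruct (cv _ hp) as [N hN]. specialize (hN N (le_n N)). rewrite ev in hN.
      unfold R_dist in hN. rewrite Rminus_0_r, Rabs_right in hN by lra. lra. }
    apply (n_def V _ _ (HVn U)) in nz. 2: apply (Psub V _ (HVP U)); auto.
    transitivity (vsub V w (vsub V w v)). { vsolve v w. } rewrite nz. vsolve w. }
  subst v. split; auto. split; auto.
  apply (GS4 U w g (fun _ => w) gs Pw Pg); auto.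
  + intros i; apply (proj1 (proj2 (hs i))).
  + intros i; apply (proj2 (proj2 (hs i))).
  + intros eps he. exists 0%nat. intros. unfold R_dist.
    replace (vsub V w w) with (vzero V) by (vsolve w). rewrite (n_zero V _ _ (HVP U) (HVn U)).
    rewrite Rminus_0_r, Rabs_R0. lra.
  + apply (cv_ext (fun i => nW U (vsub W (gs i) g))); auto.
    intros i. apply (n_sym W _ _ (HWP U) (HWn U)); auto. apply (proj1 (proj2 (hs i))).
- intros r. exists (nV U w). intros v g [-> _] _. lra.
- exists g. split; [auto|]. split; [auto|]. intros g' h1 h2. apply (hmin w g'). auto.
Qed.

End Main.

Theorem mainTheorem6 (U : GradientSpace) (K0 : Vt U -> Prop) (f : Vt U) :
  (exists u, K0 u) ->
  is_convex_set U K0 ->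
  is_Poincare_set U K0 ->
  is_V_closed U K0 ->
  Sob U f ->
  (exists u, is_Dirichlet_solution U (Kshift U K0 f) u) /\
  (forall u1 u2 g1 g2,
     is_Dirichlet_solution U (Kshift U K0 f) u1 ->
     is_Dirichlet_solution U (Kshift U K0 f) u2 ->
     is_min_grad U u1 g1 -> is_min_grad U u2 g2 -> g1 = g2).
Proof.
intros [u0 Ku0] Kconv [KSob [C [Cpos KP]]] Kcl Sf.
set (V := VS U). set (W := WS U).
assert (HVP := HVP U). assert (HWP := HWP U). assert (HVn := HVn U). assert (HWn := HWn U).
destruct Sf as [Pf [gf [Pgf Rf]]].
split.
- destruct (GS3 U f gf Rf Pf Pgf) as [gf' [Pgf' Rf']].
  set (Ss := fun v g => Kshift U K0 f v /\ Wp U g /\ Rel U v g).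
  destruct (core U Ss) as [v [g [[Kv [Pg Rvg]] hmin]]].
  + intros v g [[[h _] _] [h2 _]]. auto.
  + destruct (KSob u0 Ku0) as [Pu0 [g0 [Pg0 R0]]].
    exists (vadd V u0 f), (vadd W g0 gf). split; [split|split].
    * split. { apply (Padd V _ HVP); auto. } exists (vadd W g0 gf). split.
      { apply (Padd W _ HWP); auto. } apply G1; auto.
    * replace (vsub (VS U) (vadd V u0 f) f) with u0 by (vsolve u0 f). auto.
    * apply (Padd W _ HWP); auto.
    * apply G1; auto.
  + intros v1 g1 v2 g2 t [[[Pv1 _] K1] [Pg1 R1]] [[[Pv2 _] K2] [Pg2 R2]] ht.
    split; [split; [split|]|split].
    * apply (Padd V _ HVP); apply (Pscal V _ HVP); auto.
    * exists (vadd W (vscal W t g1) (vscal W (1 - t) g2)). split.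
      { apply (Padd W _ HWP); apply (Pscal W _ HWP); auto. } apply Rel_comb; auto.
    * replace (vsub (VS U) (vadd (VS U) (vscal (VS U) t v1) (vscal (VS U) (1 - t) v2)) f)
        with (vadd (VS U) (vscal (VS U) t (vsub (VS U) v1 f)) (vscal (VS U) (1 - t) (vsub (VS U) v2 f)))
        by (vsolve v1 v2 f).
      apply Kconv; auto.
    * apply (Padd W _ HWP); apply (Pscal W _ HWP); auto.
    * apply Rel_comb; auto.
  + intros vs gs v g hs Pv Pg cv cg.
    assert (Rvg : Rel U v g).
    { apply (GS4 U v g vs gs Pv Pg).
      - intros i; apply (proj1 (proj1 (proj1 (hs i)))).
      - intros i; apply (proj1 (proj2 (hs i))).
      - intros i; apply (proj2 (proj2 (hs i))).
      - apply (cv_ext (fun i => nV U (vsub V (vs i) v))); auto.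
        intros i. apply (n_sym V _ _ HVP HVn); auto. apply (proj1 (proj1 (proj1 (hs i)))).
      - apply (cv_ext (fun i => nW U (vsub W (gs i) g))); auto.
        intros i. apply (n_sym W _ _ HWP HWn); auto. apply (proj1 (proj2 (hs i))). }
    split; [split|split]; auto.
    * split; auto. exists g; auto.
    * apply (Kcl (fun i => vsub (VS U) (vs i) f)).
      -- intros i; apply (proj2 (proj1 (hs i))).
      -- apply (Psub V _ HVP); auto.
      -- apply (cv_ext (fun i => nV U (vsub V (vs i) v))); auto. intros i.
         f_equal. vsolve (vs i) v f.
  + intros r. exists (C * (Rabs r + nW U gf') + nV U f).
    intros v g [[[Pv _] Kv] [Pg Rvg]] hr.
    assert (R1 : Rel U (vsub (VS U) v f) (vadd W g gf')) by (apply G1; auto).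
    assert (Pvf : Vp U (vsub (VS U) v f)) by (apply (Psub V _ HVP); auto).
    assert (h1 := KP _ _ Kv (Padd W _ HWP _ _ Pg Pgf') R1).
    assert (h2 := n_tri W _ _ HWn g gf' Pg Pgf').
    assert (h3 : nV U v <= nV U (vsub (VS U) v f) + nV U f).
    { replace v with (vadd (VS U) (vsub (VS U) v f) f) at 1 by (vsolve v f).
      apply (n_tri V _ _ HVn); auto. }
    assert (nW U g + nW U gf' <= Rabs r + nW U gf') by (pose proof (Rle_abs r); lra).
    assert (C * nW U (vadd W g gf') <= C * (Rabs r + nW U gf')) by (apply Rmult_le_compat_l; lra).
    lra.
  + exists v. split; auto. exists g. split.
    * split; auto. split; auto. intros g' h1 h2. apply (hmin v g'). split; auto.
    * intros w gw Kw [Pgw [Rw _]]. apply (hmin w gw). split; auto.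
- intros u1 u2 g1 g2 [K1 [gu1 [[Pgu1 [Ru1 m1]] s1]]] [K2 [gu2 [[Pgu2 [Ru2 m2]] s2]]]
         [Pg1 [Rg1 mg1]] [Pg2 [Rg2 mg2]].
  assert (e1 : nW U g1 = nW U gu1) by (apply Rle_antisym; auto).
  assert (e2 : nW U g2 = nW U gu2) by (apply Rle_antisym; auto).
  assert (a1 : nW U gu1 <= nW U g2) by (apply (s1 u2 g2 K2); split; auto).
  assert (a2 : nW U gu2 <= nW U g1) by (apply (s2 u1 g1 K1); split; auto).
  set (a := nW U g1).
  assert (ea : nW U g2 = a) by (unfold a; lra).
  set (w := vscal V (/2) (vadd V u1 u2)). set (h := vscal W (/2) (vadd W g1 g2)).
  destruct K1 as [[Pu1 _] Kf1]. destruct K2 as [[Pu2 _] Kf2].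
  assert (Rwh : Rel U w h) by (apply G2; [apply G1; auto|lra]).
  assert (Ph : Wp U h) by (apply (Pscal W _ HWP); apply (Padd W _ HWP); auto).
  assert (Sw : Sob U w) by (split; [apply (Pscal V _ HVP); apply (Padd V _ HVP); auto|exists h; auto]).
  assert (Kw : Kshift U K0 f w).
  { split; auto.
    replace (vsub (VS U) w f)
      with (vadd (VS U) (vscal (VS U) (/2) (vsub (VS U) u1 f)) (vscal (VS U) (1 - /2) (vsub (VS U) u2 f)))
      by (unfold w; vsolve u1 u2 f; field).
    apply Kconv; auto; lra. }
  destruct (min_grad_exists U w Sw) as [gw [Pgw [Rgw mgw]]].
  assert (b1 : nW U gu1 <= nW U gw) by (apply (s1 w gw Kw); split; auto).
  assert (b2 : nW U gw <= nW U h) by (apply mgw; auto).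
  assert (ah : a <= nW U h) by (unfold a; lra).
  apply NNPP. intros ne.
  assert (a0 : 0 <= a) by (apply (n_ge0 W _ _ HWn); auto).
  destruct (Req_dec a 0) as [z|nz].
  + apply ne. rewrite (n_def W _ _ HWn g1), (n_def W _ _ HWn g2); auto; lra.
  + assert (ap : a > 0) by lra.
    set (x := vscal W (/a) g1). set (y := vscal W (/a) g2).
    assert (Px : Wp U x) by (apply (Pscal W _ HWP); auto).
    assert (Py : Wp U y) by (apply (Pscal W _ HWP); auto).
    assert (nx : nW U x = 1).
    { unfold x. rewrite (n_scal W _ _ HWn) by auto. rewrite Rabs_right.
      - fold a. field. lra.
      - left; apply Rinv_0_lt_compat; lra. }
    assert (ny : nW U y = 1).
    { unfold y. rewrite (n_scal W _ _ HWn) by auto. rewrite Rabs_right.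
      - rewrite ea. field. lra.
      - left; apply Rinv_0_lt_compat; lra. }
    assert (xy : x <> y).
    { intros exy. apply ne.
      transitivity (vscal W a x). { unfold x. vsolve g1. field. lra. }
      rewrite exy. unfold y. vsolve g2. field. lra. }
    pose proof (proj2 (proj2 (GS2 U)) x y Px Py nx ny xy) as hs.
    replace (vscal (WS U) (/2) (vadd (WS U) x y)) with (vscal W (/a) h) in hs
      by (unfold x, y, h; vsolve g1 g2).
    rewrite (n_scal W _ _ HWn) in hs by auto. rewrite Rabs_right in hs.
    2: left; apply Rinv_0_lt_compat; lra.
    assert (/ a * a <= / a * nW U h).
    { apply Rmult_le_compat_l; auto. left; apply Rinv_0_lt_compat; lra. }
    rewrite Rinv_l in H by lra. lra.
Qed.
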